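(* Let $R$ be a ring and let $\gamma_1,\gamma_2$ be bijections of $\mathbb{P}(R)$ each induced by a semilinear bijection of $R^2$. If $\gamma_1$ and $\gamma_2$ coincide on all points of some connected component $C$ of $\mathbb{P}(R)$, then $\gamma_1=\gamma_2$.
   Context: $R$ is an associative ring with unit element $1$; $R^*$ denotes its group of units and $\mathrm{GL}_2(R)$ the group of invertible $2\times2$ matrices over $R$. A pair $(a,b)\in R^2$ is admissible if it is the first row of some matrix in $\mathrm{GL}_2(R)$. The projective line $\mathbb{P}(R)$ is the set of all cyclic submodules $R(a,b)$ of the left $R$-module $R^2$ with $(a,b)$ admissible. Two points $R(a,b)$, $R(c,d)$ are distant iff $\begin{pmatrix}a&b\\c&d\end{pmatrix}\in\mathrm{GL}_2(R)$; connected components refer to the graph on $\mathbb{P}(R)$ whose edges are the pairs of distant points. A semilinear bijection of $R^2$ is a bijective additive map $f:R^2\to R^2$ for which there is a ring automorphism $\zeta$ of $R$ with $f(rv)=r^\zeta f(v)$ for all $r\in R$, $v\in R^2$; a bijection $\gamma$ of $\mathbb{P}(R)$ is induced by $f$ if $p^\gamma=f(p)$ for all $p\in\mathbb{P}(R)$. *)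

(* Defs.v *)
From HB Require Import structures.
From mathcomp Require Import all_boot all_order all_algebra.
Set Implicit Arguments. Unset Strict Implicit. Unset Printing Implicit Defensive.
Import GRing.Theory.
Local Open Scope ring_scope.

Section ProjLine.
Variable R : pzRingType.

Definition vec := (R * R)%type.
Definition vadd (u v : vec) : vec := (u.1 + v.1, u.2 + v.2).
Definition vscale (r : R) (v : vec) : vec := (r * v.1, r * v.2).

Definition mx2 (a b c d : R) : 'M[R]_2 :=
  \matrix_(i < 2, j < 2)
    if i == 0 then (if j == 0 then a else b) else (if j == 0 then c else d).

Definition inGL2 (M : 'M[R]_2) : Prop :=
  exists N : 'M[R]_2, M *m N = 1%:M /\ N *m M = 1%:M.

Definition admissible (a b : R) : Prop := exists c d, inGL2 (mx2 a b c d).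

Definition vset := vec -> Prop.

Definition cyc (a b : R) : vset := fun v => exists r : R, v = vscale r (a, b).

Definition is_point (p : vset) : Prop := exists a b, admissible a b /\ p = cyc a b.

Definition distant (p q : vset) : Prop :=
  exists a b c d, p = cyc a b /\ q = cyc c d /\ inGL2 (mx2 a b c d).

Inductive connected (p : vset) : vset -> Prop :=
  | conn_refl : is_point p -> connected p p
  | conn_step q s : connected p q -> is_point s -> distant q s -> connected p s.

Definition is_component (C : vset -> Prop) : Prop :=
  exists p0, is_point p0 /\ forall q, C q <-> connected p0 q.

Definition ring_aut (z : R -> R) : Prop :=
  bijective z /\ (forall x y, z (x + y) = z x + z y) /\
  (forall x y, z (x * y) = z x * z y) /\ z 1 = 1.

Definition semilinear_bij (f : vec -> vec) : Prop :=
  bijective f /\ (forall u v, f (vadd u v) = vadd (f u) (f v)) /\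
  exists z, ring_aut z /\ forall r v, f (vscale r v) = vscale (z r) (f v).

Definition image (f : vec -> vec) (p : vset) : vset := fun w => exists v, p v /\ w = f v.

Definition bij_points (g : vset -> vset) : Prop :=
  (forall p, is_point p -> is_point (g p)) /\
  (forall p q, is_point p -> is_point q -> g p = g q -> p = q) /\
  (forall q, is_point q -> exists p, is_point p /\ g p = q).

Definition induced_by (g : vset -> vset) (f : vec -> vec) : Prop :=
  forall p, is_point p -> g p = image f p.

End ProjLine.

(* Main.v *)
Require Import Defs.
From Stdlib Require Import FunctionalExtensionality PropExtensionality.
From HB Require Import structures.
From mathcomp Require Import all_boot all_order all_algebra.
Set Implicit Arguments. Unset Strict Implicit. Unset Printing Implicit Defensive.
Import GRing.Theory.
Local Open Scope ring_scope.

Lemma mx2_mul (R : pzRingType) (a b c d a' b' c' d' : R) :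
  mx2 a b c d *m mx2 a' b' c' d' =
  mx2 (a*a' + b*c') (a*b' + b*d') (c*a' + d*c') (c*b' + d*d').
Proof.
apply/matrixP => i j; rewrite !mxE big_ord_recr big_ord_recr big_ord0 /= add0r !mxE.
by case: i => [[|[|k]] Hi]; case: j => [[|[|l]] Hj].
Qed.

Lemma mx2_1 (R : pzRingType) : (1%:M : 'M[R]_2) = mx2 1 0 0 1.
Proof.
apply/matrixP => i j; rewrite !mxE.
by case: i => [[|[|k]] Hi]; case: j => [[|[|l]] Hj].
Qed.

Lemma mx2_eta (R : pzRingType) (N : 'M[R]_2) : N = mx2 (N 0 0) (N 0 1) (N 1 0) (N 1 1).
Proof.
apply/matrixP => i j; rewrite !mxE.
case: i => [[|[|k]] Hi]; case: j => [[|[|l]] Hj] //=; congr (N _ _); exact: val_inj.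
Qed.

Lemma mx2_inj (R : pzRingType) (a b c d a' b' c' d' : R) :
  mx2 a b c d = mx2 a' b' c' d' -> [/\ a = a', b = b', c = c' & d = d'].
Proof.
move=> E.
have E00 := congr1 (fun A : 'M[R]_2 => A 0 0) E.
have E01 := congr1 (fun A : 'M[R]_2 => A 0 1) E.
have E10 := congr1 (fun A : 'M[R]_2 => A 1 0) E.
have E11 := congr1 (fun A : 'M[R]_2 => A 1 1) E.
by move: E00 E01 E10 E11; rewrite /= !mxE.
Qed.

Section Core.
Variable R : pzRingType.
Variables a b c d : R.
Definition lin (s t : R) : vec R := (s*a+t*c, s*b+t*d).

Hypothesis free : forall s t, s*a+t*c = 0 -> s*b+t*d = 0 -> s = 0 /\ t = 0.
Hypothesis span : forall v : vec R, exists s t, v = lin s t.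

Lemma lin_inj s t s' t' : lin s t = lin s' t' -> s = s' /\ t = t'.
Proof.
case=> E1 E2.
have [H1 H2] : s - s' = 0 /\ t - t' = 0.
  apply: free; rewrite !mulrBl addrACA.
    by rewrite E1 -opprD subrr.
  by rewrite E2 -opprD subrr.
by split; apply/eqP; rewrite -subr_eq0; apply/eqP.
Qed.

Lemma vscale_lin r s t : vscale r (lin s t) = lin (r*s) (r*t).
Proof. by rewrite /vscale /lin /= !mulrDr !mulrA. Qed.

Lemma vadd_lin s t s' t' : vadd (lin s t) (lin s' t') = lin (s+s') (t+t').
Proof. by rewrite /vadd /lin /= !mulrDl addrACA [X in (_, X)]addrACA. Qed.

Variable h : vec R -> vec R.
Variable z : R -> R.
Hypothesis hadd : forall u v, h (vadd u v) = vadd (h u) (h v).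
Hypothesis hs : forall r v, h (vscale r v) = vscale (z r) (h v).
Hypothesis z1 : z 1 = 1.
Hypothesis fixe : Defs.image h (cyc a b) = cyc a b.
Hypothesis fixx : forall x, Defs.image h (cyc (x*a+c) (x*b+d)) = cyc (x*a+c) (x*b+d).

Lemma cyc_lin s t : cyc (s*a+t*c) (s*b+t*d) = fun v => exists r, v = vscale r (lin s t).
Proof. by []. Qed.

Lemma img_in s t : Defs.image h (fun v => exists r, v = vscale r (lin s t)) = (fun v => exists r, v = vscale r (lin s t)) ->
  (exists al, h (lin s t) = vscale al (lin s t)) /\ exists r, lin s t = h (vscale r (lin s t)).
Proof.
move=> E; split.
  have : Defs.image h (fun v => exists r, v = vscale r (lin s t)) (h (lin s t)).
    by exists (lin s t); split => //; exists 1; rewrite vscale_lin !mul1r.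
  by rewrite E.
have : Defs.image h (fun v => exists r, v = vscale r (lin s t)) (lin s t).
  by rewrite E; exists 1; rewrite vscale_lin !mul1r.
move=> [v [[r Ev] Eh]]; exists r; by rewrite -Ev.
Qed.

Lemma core : forall p q : R, Defs.image h (cyc p q) = cyc p q.
Proof.
have Ee : cyc a b = fun v => exists r, v = vscale r (lin 1 0).
  by rewrite -cyc_lin !mul1r !mul0r !addr0.
have Ex : forall x, cyc (x*a+c) (x*b+d) = fun v => exists r, v = vscale r (lin x 1).
  by move=> x; rewrite -cyc_lin !mul1r.
have [[al Hal] [r0 Hr0]] := img_in (etrans (congr1 _ (esym Ee)) (etrans fixe Ee)).
have [[be Hbe] _] := img_in (etrans (congr1 _ (esym (Ex 0))) (etrans (fixx 0) (Ex 0))).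
have hlin : forall s t, h (lin s t) = lin (z s * al) (z t * be).
  move=> s t.
  have -> : lin s t = vadd (vscale s (lin 1 0)) (vscale t (lin 0 1)).
    by rewrite !vscale_lin vadd_lin !mulr1 !mulr0 addr0 add0r.
  by rewrite hadd !hs Hal Hbe !vscale_lin vadd_lin !mulr0 addr0 add0r !mulrA !mulr1.
have hx : forall x, z x * al = be * x.
  move=> x.
  have [[de Hde] _] := img_in (etrans (congr1 _ (esym (Ex x))) (etrans (fixx x) (Ex x))).
  move: Hde; rewrite hlin vscale_lin mulr1 z1 mul1r => /lin_inj [-> ->]; done.
have albe : al = be by have := hx 1; rewrite z1 mul1r mulr1.
have hv : forall v, h v = vscale al v.
  move=> v; have [s [t ->]] := span v.
  by rewrite hlin vscale_lin -albe !hx albe.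
have r0inv : al * r0 = 1.
  move: Hr0; rewrite hv !vscale_lin mulr0 mulr1 => /lin_inj [E _]; done.
move=> p q; apply: functional_extensionality => w.
apply: propositional_extensionality; split.
  by case=> v [[r ->] ->]; rewrite hv; exists (al * r); rewrite /vscale /= !mulrA.
case=> s ->; exists (vscale (r0 * s) (p, q)); split; first by exists (r0 * s).
by rewrite hv /vscale /= !mulrA r0inv !mul1r.
Qed.
End Core.

Lemma inGL2_mul (R : pzRingType) (A B : 'M[R]_2) : inGL2 A -> inGL2 B -> inGL2 (A *m B).
Proof.
move=> [NA [HA1 HA2]] [NB [HB1 HB2]]; exists (NB *m NA); split.
  by rewrite mulmxA -(mulmxA A) HB1 mulmx1 HA1.
by rewrite mulmxA -(mulmxA NB) HA2 mulmx1 HB2.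
Qed.

Ltac simp2 := rewrite ?mul1r ?mulr1 ?mul0r ?mulr0 ?addr0 ?add0r ?addrN ?addNr ?mulrN ?mulNr.

Lemma gl_a (R : pzRingType) (x : R) : inGL2 (mx2 1 0 x 1).
Proof.
exists (mx2 1 0 (-x) 1); rewrite !mx2_mul mx2_1; split; congr mx2; simp2 => //.
Qed.

Lemma gl_b (R : pzRingType) (x : R) : inGL2 (mx2 x 1 1 0).
Proof.
exists (mx2 0 1 1 (-x)); rewrite !mx2_mul mx2_1; split; congr mx2; simp2 => //.
Qed.

Lemma image_comp (R : pzRingType) (f g : vec R -> vec R) (p : vset R) :
  Defs.image (fun v => g (f v)) p = Defs.image g (Defs.image f p).
Proof.
apply: functional_extensionality => w; apply: propositional_extensionality; split.
  by case=> v [pv ->]; exists (f v); split => //; exists v.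
by case=> u [[v [pv ->]] ->]; exists v.
Qed.

Lemma image_cancel (R : pzRingType) (f g : vec R -> vec R) (p : vset R) :
  cancel f g -> Defs.image g (Defs.image f p) = p.
Proof.
move=> K; apply: functional_extensionality => w; apply: propositional_extensionality; split.
  by case=> u [[v [pv ->]] ->]; rewrite K.
by move=> pw; exists (f w); split; [exists w | rewrite K].
Qed.

Theorem mainTheorem5 (R : pzRingType) (g1 g2 : vset R -> vset R)
  (f1 f2 : vec R -> vec R) (C : vset R -> Prop) :
  bij_points g1 -> bij_points g2 ->
  semilinear_bij f1 -> induced_by g1 f1 ->
  semilinear_bij f2 -> induced_by g2 f2 ->
  is_component C ->
  (forall p, C p -> g1 p = g2 p) ->
  forall p, is_point p -> g1 p = g2 p.
Proof.
move=> _ _ [_ [f1add [z1 [[z1bij [z1add [z1mul z1one]]] f1s]]]] ind1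
  [[k2 K2 K2']  [f2add [z2 [[[z2' Z2 Z2'] [z2add [z2mul z2one]]] f2s]]]] ind2
  [p0 [pt0 HC]] Heq.
pose h := fun v => k2 (f1 v).
pose z := fun r => z2' (z1 r).
have hadd : forall u v, h (vadd u v) = vadd (h u) (h v).
  move=> u v; rewrite /h f1add -{1}(K2' (f1 u)) -{1}(K2' (f1 v)) -f2add K2 //.
have hs : forall r v, h (vscale r v) = vscale (z r) (h v).
  move=> r v; rewrite /h /z f1s -{1}(K2' (f1 v)) -{1}(Z2' (z1 r)) -f2s K2 //.
have zone : z 1 = 1 by rewrite /z z1one -{1}z2one Z2.
have equiv : forall p, Defs.image f1 p = Defs.image f2 p <-> Defs.image h p = p.
  move=> p; have Eh : Defs.image h p = Defs.image k2 (Defs.image f1 p) := image_comp f1 k2 p.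
  rewrite Eh; split => E.
    by rewrite E image_cancel.
  by rewrite -{2}E (image_cancel _ K2').
have gequiv : forall p, is_point p -> (g1 p = g2 p <-> Defs.image h p = p).
  by move=> p pp; rewrite ind1 // ind2 //; exact: equiv.
have [a [b [[c [d [N [MN NM]]]] Ep0]]] := pt0.
rewrite (mx2_eta N) !mx2_mul mx2_1 in MN NM.
case: (mx2_inj MN) => e1 e2 e3 e4.
case: (mx2_inj NM) => e1' e2' e3' e4'.
have free : forall s t, s*a+t*c = 0 -> s*b+t*d = 0 -> s = 0 /\ t = 0.
  move=> s t E1 E2; split.
    have -> : s = (s*a+t*c)*N 0 0 + (s*b+t*d)*N 1 0.
      by rewrite !mulrDl -!mulrA addrACA -!mulrDr e1 e3 mulr1 mulr0 addr0.
    by rewrite E1 E2 !mul0r addr0.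
  have -> : t = (s*a+t*c)*N 0 1 + (s*b+t*d)*N 1 1.
    by rewrite !mulrDl -!mulrA addrACA -!mulrDr e2 e4 mulr1 mulr0 add0r.
  by rewrite E1 E2 !mul0r addr0.
have span : forall v : vec R, exists s t, v = lin a b c d s t.
  case=> v1 v2; exists (v1 * N 0 0 + v2 * N 1 0), (v1 * N 0 1 + v2 * N 1 1).
  rewrite /lin; congr pair.
    by rewrite !mulrDl -!mulrA addrACA -!mulrDr e1' e3' mulr1 mulr0 addr0.
  by rewrite !mulrDl -!mulrA addrACA -!mulrDr e2' e4' mulr0 mulr1 add0r.
have C0 : connected p0 p0 by apply: conn_refl.
have fixe : Defs.image h (cyc a b) = cyc a b.
  by rewrite -Ep0; apply/gequiv => //; apply: Heq; apply/HC.
have fixx : forall x, Defs.image h (cyc (x*a+c) (x*b+d)) = cyc (x*a+c) (x*b+d).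
  move=> x.
  have ptq : is_point (cyc (x*a+c) (x*b+d)).
    exists (x*a+c), (x*b+d); split => //; exists a, b.
    have -> : mx2 (x*a+c) (x*b+d) a b = mx2 x 1 1 0 *m mx2 a b c d.
      by rewrite mx2_mul; simp2.
    apply: inGL2_mul; first exact: gl_b.
    by exists (mx2 (N 0 0) (N 0 1) (N 1 0) (N 1 1)); rewrite !mx2_mul mx2_1.
  apply/gequiv => //; apply: Heq; apply/HC.
  apply: (conn_step C0 ptq).
  exists a, b, (x*a+c), (x*b+d); split => //; split => //.
  have -> : mx2 a b (x*a+c) (x*b+d) = mx2 1 0 x 1 *m mx2 a b c d.
    by rewrite mx2_mul; simp2.
  apply: inGL2_mul; first exact: gl_a.
  by exists (mx2 (N 0 0) (N 0 1) (N 1 0) (N 1 1)); rewrite !mx2_mul mx2_1.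
move=> p [p1 [p2 [adm ->]]].
have pp : is_point (cyc p1 p2) by exists p1, p2.
apply/(gequiv _ pp).
exact: (core free span hadd hs zone fixe fixx).
Qed.
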